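(* The class of data languages accepted by SAFA is not closed under Kleene closure: there exists a data language $L$ accepted by some SAFA such that no SAFA accepts $L^*=\{u_1u_2\cdots u_n: n\geq 0,\ u_i\in L\}$.
   Context: $D$ is a fixed countably infinite set of data values; for a finite alphabet $\Sigma$, data words are elements of $(\Sigma\times D)^*$. A set augmented finite automaton (SAFA) is a tuple $M=(Q,\Sigma\times D,q_0,F,H,\delta)$: $Q$ finite set of states, $q_0\in Q$ initial, $F\subseteq Q$ final, $H=\{h_1,\dots,h_m\}$ a finite collection of (names of) sets of data values, $\delta\subseteq Q\times\Sigma\times C\times OP\times Q$ with $C=\{p(h_i),\,!p(h_i): h_i\in H\}$, $OP=\{-\}\cup\{\mathsf{ins}(h_i):h_i\in H\}$. Configurations are $(q,\langle S_1,\dots,S_m\rangle)$ with $S_i\subseteq D$ finite; initially state $q_0$ and all sets empty. On reading $(a,d)$, a transition $(q,a,\alpha,op,q')$ from the current state may be taken if $\alpha=p(h_i)$ and $d\in S_i$, or $\alpha=\,!p(h_i)$ and $d\notin S_i$; then the state becomes $q'$ and if $op=\mathsf{ins}(h_j)$ the value $d$ is added to $S_j$ ($op=-$ changes nothing). A word is accepted if some run reads it entirely and ends in $F$; $L(M)$ is the set of accepted words. *)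

(* Defs.v *)
(* Data values D are modelled by nat (a fixed countably
   infinite set). *)
From mathcomp Require Import all_boot.
Set Implicit Arguments. Unset Strict Implicit. Unset Printing Implicit Defensive.

Definition data := nat.

Definition dword (Sigma : finType) := seq (Sigma * data).
Definition dlang (Sigma : finType) := dword Sigma -> Prop.

(* Conditions p(h_i) / !p(h_i) and operations -, ins(h_i), for H = {h_0..h_{m-1}}. *)
Inductive cond (m : nat) := CIn of 'I_m | CNotIn of 'I_m.
Inductive op (m : nat) := ONop | OIns of 'I_m.

(* A SAFA: finite state set Q, initial q0, final states F, m sets, and a
   (finite, since all components are finite) transition relation delta. *)
Record safa (Sigma : finType) := Safa {
  st : finType;
  q0 : st;
  final : pred st;
  nsets : nat;
  delta : st -> Sigma -> cond nsets -> op nsets -> st -> bool }.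

(* Set contents: each set is a finite set of data values, represented by a list. *)
Definition sets (m : nat) := 'I_m -> seq data.

Definition sat m (c : cond m) (S : sets m) (d : data) : bool :=
  match c with
  | CIn i => d \in S i
  | CNotIn i => d \notin S i
  end.

Definition upd m (o : op m) (S : sets m) (d : data) : sets m :=
  match o with
  | ONop => S
  | OIns j => fun i => if i == j then d :: S i else S i
  end.

Fixpoint acc_from Sigma (M : safa Sigma) (q : st M) (S : sets (nsets M))
    (w : dword Sigma) : Prop :=
  match w with
  | [::] => final q
  | (a, d) :: w' => exists (c : cond (nsets M)) (o : op (nsets M)) (q' : st M),
      [/\ delta q a c o q', sat c S d & acc_from q' (upd o S d) w']
  end.

Definition empty_sets m : sets m := fun _ => [::].

Definition lang Sigma (M : safa Sigma) : dlang Sigma :=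
  fun w => acc_from (q0 M) (@empty_sets (nsets M)) w.

Definition safa_lang Sigma (L : dlang Sigma) : Prop :=
  exists M : safa Sigma, forall w, lang M w <-> L w.

Definition kstar Sigma (L : dlang Sigma) : dlang Sigma :=
  fun w => exists us : seq (dword Sigma), (forall u, u \in us -> L u) /\ w = flatten us.

(* Main.v *)
Require Import Defs.
From mathcomp Require Import all_boot.
From mathcomp Require Import zify.
Set Implicit Arguments. Unset Strict Implicit. Unset Printing Implicit Defensive.

Lemma upd_sub m (o : op m) S d k v : v \in S k -> v \in upd o S d k.
Proof. case: o => //= j; case: (k == j) => // Hv; by rewrite inE Hv orbT. Qed.

Lemma upd_inv m (o : op m) S d k v : v \in upd o S d k -> (v \in S k) || (v == d).
Proof.
case: o => [|j] /=; first by move->.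
case: (k == j); rewrite ?inE; last by move->.
by case/orP => ->; rewrite ?orbT.
Qed.

Lemma upd_neq m (o : op m) S x k v : v != x -> (v \in upd o S x k) = (v \in S k).
Proof. move=> /negbTE H; case: o => [|j] //=; case: (k == j) => //; by rewrite inE H. Qed.

Lemma acc_agree Sigma (M : safa Sigma) w : forall q (S S' : sets (nsets M)),
  (forall k v, v \in map snd w -> (v \in S k) = (v \in S' k)) ->
  acc_from q S w -> acc_from q S' w.
Proof.
elim: w => [|[a d] w IH] q S S' Hag //=.
case=> c [o [q' [Hd Hs Ha]]]; exists c, o, q'; split => //.
- by case: c Hd Hs => i _ /=; rewrite Hag // /= inE eqxx.
- apply: IH Ha => k v Hv.
  have H' : (v \in S k) = (v \in S' k) by apply: Hag; rewrite /= inE Hv orbT.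
  case: o Hd => [|j] _ //=; by case: (k == j); rewrite ?inE H'.
Qed.

Definition blk (d : nat) : dword unit := [:: (tt, d); (tt, d)].
Definition blocks s n := flatten (map blk (iota s n)).

Lemma blocksS s n : blocks s n.+1 = (tt, s) :: (tt, s) :: blocks s.+1 n.
Proof. by []. Qed.

Lemma blocks_vals n : forall s v, v \in map snd (blocks s n) -> s <= v < s + n.
Proof.
elim: n => [|n IH] s v; first by [].
rewrite blocksS /= !inE => /orP [/eqP -> | /orP [/eqP -> | /IH]]; lia.
Qed.

Fixpoint pe (w : dword unit) : bool :=
  match w with
  | [::] => true
  | x :: (y :: w') => (x == y) && pe w'
  | _ => false
  end.

Definition L : dlang unit := fun w => exists d, w = blk d.

Lemma kstar_pe w : kstar L w -> pe w.
Proof.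
case=> us [Hus ->]; elim: us Hus => [|u us IH] Hus //=.
have [d ->] := Hus u (mem_head _ _).
rewrite /blk /= eqxx /=; apply IH => x Hx; apply Hus; by rewrite inE Hx orbT.
Qed.

Lemma nil_sub (A B : seq nat) : (forall v, v \in A -> v \in B) -> B == [::] -> A == [::].
Proof. case: A => // a A H /eqP HB; have := H a (mem_head _ _); by rewrite HB. Qed.

Lemma key (M : safa unit) n : forall s (q : st M) (S : sets (nsets M)),
  (forall k v, v \in S k -> v < s) ->
  #|[pred k | S k == [::]]| < n ->
  acc_from q S (blocks s n) ->
  exists w, acc_from q S w /\ ~~ pe w.
Proof.
elim: n => [|n IH] s q S Hinv Hcard //.
rewrite blocksS /= => [[c1 [o1 [q1 [Hd1 Hs1 [c2 [o2 [q2 [Hd2 Hs2 Ha]]]]]]]]].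
have Hinv1 : forall k v, v \in upd o1 S s k -> v <= s.
  by move=> k v /upd_inv /orP [/Hinv/ltnW|/eqP->].
case: c2 Hd2 Hs2 => k Hd2 Hs2 /=.
- case Hh: (has (fun v => v != s) (upd o1 S s k)).
  + move/hasP: Hh => [v Hv Hvs].
    exists ((tt, s) :: (tt, v) :: blocks s.+1 n); split.
    * exists c1, o1, q1; split => //; exists (CIn k), o2, q2; split => //.
      apply: acc_agree Ha => k' v' Hv'.
      have := blocks_vals Hv'; have := Hinv1 _ _ Hv => Hvle Hr.
      rewrite !upd_neq //; apply/eqP; lia.
    * rewrite /=; apply/nandP; left; apply/eqP => [[E]].
      by move: Hvs; rewrite E eqxx.
  + have HSk : S k == [::].
      apply: (@nil_sub _ [::]) => // v Hv.
      have Hv1 := upd_sub o1 s Hv.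
      have Hlt := Hinv _ _ Hv.
      have : has (fun v => v != s) (upd o1 S s k).
        by apply/hasP; exists v => //; apply/eqP; lia.
      by rewrite Hh.
    have Hi : forall k' v, v \in upd o2 (upd o1 S s) s k' -> v < s.+1.
      by move=> k' v /upd_inv /orP [/Hinv1|/eqP->].
    have Hc : #|[pred k0 | upd o2 (upd o1 S s) s k0 == [::]]| < n.
      have : #|[pred k0 | upd o2 (upd o1 S s) s k0 == [::]]| <
             #|[pred k | S k == [::]]|.
        apply: proper_card; apply/properP; split.
          apply/subsetP => k' /=; rewrite !inE; apply: nil_sub => v Hv.
          by apply: upd_sub; apply: upd_sub.
        exists k; first by rewrite inE.
        rewrite inE; apply/negP => /eqP E.
        by have := upd_sub o2 s Hs2; rewrite E.
      move=> H; apply: leq_trans H _; by [].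
    have [w [Hw Hpw]] := IH s.+1 q2 (upd o2 (upd o1 S s) s) Hi Hc Ha.
    exists ((tt, s) :: (tt, s) :: w); split => //.
    exists c1, o1, q1; split => //; exists (CIn k), o2, q2; split => //.
    by rewrite /= eqxx.
- exists ((tt, s) :: (tt, s.+1 + n) :: blocks s.+1 n); split.
  + exists c1, o1, q1; split => //; exists (CNotIn k), o2, q2; split => //.
    * apply/negP => /Hinv1; lia.
    * apply: acc_agree Ha => k' v' Hv'.
      have := blocks_vals Hv' => Hr.
      rewrite !upd_neq //; apply/eqP; lia.
  + rewrite /=; apply/nandP; left; apply/eqP => [[E]]; lia.
Qed.

Definition d0 (q : 'I_3) (a : unit) (c : cond 1) (o : op 1) (q' : 'I_3) : bool :=
  match c, o with
  | CNotIn _, OIns _ => (val q == 0) && (val q' == 1)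
  | CIn _, ONop => (val q == 1) && (val q' == 2)
  | _, _ => false
  end.

Definition M0 : safa unit :=
  {| st := 'I_3; q0 := ord0; final := fun q : 'I_3 => val q == 2; nsets := 1;
     delta := d0 |}.

Lemma M0_lang w : lang M0 w <-> L w.
Proof.
split.
- rewrite /lang; case: w => [|[a d] [|[a' d'] w]] /=.
  + by [].
  + case=> c [o [q' [Hd _ Hf]]].
    case: c o Hd => i [|j] //= /eqP Hq'.
    by move: Hf; rewrite /= Hq'.
  + case=> c [o [q1 [Hd Hs]]] [c' [o' [q2 [Hd' Hs' Ha]]]].
    case: c o Hd Hs Hd' Hs' Ha => i [|j] //= /eqP Hq1 _.
    case: c' o' => i' [|j'] //=; rewrite Hq1 //= => /eqP Hq2.
    rewrite (ord1 i') (ord1 j) eqxx inE => /eqP Ed.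
    case: w => [|x w] /=.
      by move=> _; exists d; rewrite /blk Ed; case: a; case: a'.
    case: x => x1 x2 [c'' [o'' [q3 [Hd'' _ _]]]].
    by move: Hd''; case: c'' o'' => ? [|?] //=; rewrite Hq2.
- case=> x ->; rewrite /lang /=.
  exists (CNotIn ord0), (OIns ord0), (Ordinal (isT : 1 < 3)); split => //.
  exists (CIn ord0), (@ONop 1), (Ordinal (isT : 2 < 3)); split => //.
  by rewrite /= inE.
Qed.

Theorem theorem7 :
  exists (Sigma : finType) (L : dlang Sigma), safa_lang L /\ ~ safa_lang (kstar L).
Proof.
exists (unit : finType), L; split.
  by exists M0; exact: M0_lang.
case=> M HM.
have [] := @key M (nsets M).+1 0 (q0 M) (@empty_sets (nsets M)).
- by [].
- by have := max_card [pred k : 'I_(nsets M) | @empty_sets (nsets M) k == [::]];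
     rewrite card_ord.
- apply/(HM (blocks 0 (nsets M).+1)); exists (map blk (iota 0 (nsets M).+1)); split => //.
  by move=> u /mapP [d _ ->]; exists d.
move=> w [Hw Hpw].
have := kstar_pe (proj1 (HM w) Hw); by rewrite (negbTE Hpw).
Qed.
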